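(* Let $0<c<1/2$. Then $$\sum_{i\in\mathrm{OPT}} w(i)\sum_{B\in\mathcal F(i)} c^{\,1+\mathrm{brank}(i,B)}\le\frac{2c}{1-c}\,w(\mathrm{OPT}).$$
   Context: Let $U$ be a finite ground set with weight function $w:U\to\mathbb{R}_{\ge0}$ taking pairwise distinct values; for $X\subseteq U$, $w(X)=\sum_{x\in X}w(x)$. Let $\mathcal F$ be a laminar family of subsets of $U$ (for any $A,B\in\mathcal F$: $A\subseteq B$, $B\subseteq A$, or $A\cap B=\emptyset$) with $U\in\mathcal F$; each $A\in\mathcal F$ has a positive integer capacity $\mu(A)$, with $\mu(A)<\mu(B)$ whenever $A\subsetneq B$. A set $X\subseteq U$ is independent iff $|X\cap A|\le\mu(A)$ for all $A\in\mathcal F$. For $i\in U$, $\mathcal F(i)$ is the set of all members of $\mathcal F$ containing $i$. For $B\in\mathcal F$, $\mathrm{OPT}(B)$ is the maximum-weight independent subset of $B$, and $\mathrm{OPT}=\mathrm{OPT}(U)$. The backward rank $\mathrm{brank}(i,B)$ is the number of elements of $\mathrm{OPT}(B)$ of weight less than $w(i)$. Standing convention of the paper: by padding $U$ with dummy elements of infinitesimal weight, one assumes $|\mathrm{OPT}(B)|=\mu(B)$ for every $B\in\mathcal F$. *)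

(* Defs.v *)
From HB Require Import structures.
From mathcomp Require Import all_boot all_order all_algebra.
Set Implicit Arguments. Unset Strict Implicit. Unset Printing Implicit Defensive.
Import Order.TTheory GRing.Theory Num.Theory.
Local Open Scope ring_scope.

Section LaminarDefs.
Variables (U : finType) (R : realFieldType).

Definition laminar (F : {set {set U}}) : Prop :=
  forall A B, A \in F -> B \in F ->
    [|| A \subset B, B \subset A | [disjoint A & B]].

Definition wset (w : U -> R) (X : {set U}) : R := \sum_(x in X) w x.

Definition indep (F : {set {set U}}) (mu : {set U} -> nat) (X : {set U}) : Prop :=
  forall A, A \in F -> (#|X :&: A| <= mu A)%N.

Definition is_opt (F : {set {set U}}) (mu : {set U} -> nat) (w : U -> R)
    (B OB : {set U}) : Prop :=
  [/\ OB \subset B, indep F mu OB &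
      forall X : {set U}, X \subset B -> indep F mu X -> wset w X <= wset w OB].

Definition brank (OPT : {set U} -> {set U}) (w : U -> R) (i : U) (B : {set U}) : nat :=
  #|[set j in OPT B | w j < w i]|.

End LaminarDefs.

(* Main.v *)
Require Import Defs.
From HB Require Import structures.
From mathcomp Require Import all_boot all_order all_algebra.
From mathcomp Require Import ring lra zify.
Set Implicit Arguments. Unset Strict Implicit. Unset Printing Implicit Defensive.
Import Order.TTheory GRing.Theory Num.Theory.
Local Open Scope ring_scope.
Lemma pow_01 (R : realFieldType) (c : R) n : 0 <= c -> c <= 1 -> 0 <= c ^+ n <= 1.
Proof. by move=> h0 h1; rewrite exprn_ge0 // exprn_ile1. Qed.

Lemma L0 (R : realFieldType) (c : R) n : 0 <= c -> c <= 1 -> 1 - c ^+ n <= n%:R * (1 - c).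
Proof.
move=> h0 h1; elim: n => [|n IH]; first by rewrite expr0 subrr mul0r.
rewrite exprS -natr1.
have [a0 a1] := andP (pow_01 n h0 h1).
nra.
Qed.

Lemma sum_mem_le (I : eqType) (r : seq I) (s : I -> nat) x :
  x \in r -> (s x <= \sum_(y <- r) s y)%N.
Proof.
elim: r => [|y r IH] //=; rewrite inE big_cons => /orP[/eqP->|/IH h].
  by rewrite leq_addr.
by rewrite (leq_trans h) // leq_addl.
Qed.

Lemma L1 (R : realFieldType) (c : R) (I : Type) (r : seq I) (s : I -> nat) :
  0 <= c -> c <= 1 ->
  1 - c ^+ (\sum_(y <- r) s y) <= \sum_(y <- r) (1 - c ^+ s y).
Proof.
move=> h0 h1; elim: r => [|y r IH]; first by rewrite !big_nil expr0 subrr.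
rewrite !big_cons exprD.
have [a0 a1] := andP (pow_01 (s y) h0 h1).
have [b0 b1] := andP (pow_01 (\sum_(j <- r) s j) h0 h1).
nra.
Qed.

Lemma L2 (R : realFieldType) (c : R) (I : eqType) (r : seq I) (s : I -> nat) :
  0 <= c -> c <= 1 ->
  2 * (1 - c ^+ (\sum_(y <- r) s y)) <=
  \sum_(x <- r) (1 - c ^+ s x) * (1 + c ^+ (\sum_(y <- r) s y - s x)).
Proof.
move=> h0 h1; elim: r => [|y r IH]; first by rewrite !big_nil expr0 subrr mulr0.
rewrite !big_cons.
set Sr := \sum_(j <- r) s j.
have -> : (s y + Sr - s y = Sr)%N by rewrite addKn.
rewrite (eq_big_seq (fun x => (1 - c ^+ s x) + c ^+ s y * ((1 - c ^+ s x) * c ^+ (Sr - s x)))); last first.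
  move=> x xr; rewrite -addnBA; last exact: sum_mem_le.
  by rewrite exprD; ring.
rewrite big_split /= -mulr_sumr.
move: IH; rewrite (eq_bigr (fun x => (1 - c ^+ s x) + (1 - c ^+ s x) * c ^+ (Sr - s x))); last by move=> x _; ring.
rewrite big_split /= => IH.
have L := L1 r s h0 h1.
set A := \sum_(i <- r) (1 - c ^+ s i) in IH L *.
set B := \sum_(i <- r) (1 - c ^+ s i) * c ^+ (Sr - s i) in IH *.
rewrite exprD.
have [a0 a1] := andP (pow_01 (s y) h0 h1).
have [b0 b1] := andP (pow_01 Sr h0 h1).
nra.
Qed.

Lemma step (R : realFieldType) (c : R) (I : eqType) (r : seq I) (s g : I -> nat) (f g0 : nat) :
  0 < c -> c <= 1 / 2 ->
  (forall x, x \in r -> (g x + s x < g0 + (f + \sum_(y <- r) s y))%N) ->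
  (1 - c ^+ (f + \sum_(y <- r) s y)) * (1 + c ^+ g0) <=
  2 * f%:R * (1 - c) + \sum_(x <- r) (1 - c ^+ s x) * (1 + c ^+ (g x + 1)).
Proof.
move=> hc0 hc Hg.
have h0 : 0 <= c by apply: ltW.
have h1 : c <= 1 by apply: (le_trans hc); lra.
set Sr := \sum_(y <- r) s y.
set z := c ^+ g0.
have [z0 z1] := andP (pow_01 g0 h0 h1).
rewrite -/z in z0 z1.
have E : \sum_(x <- r) (1 - c ^+ s x) * (1 + z * c ^+ (f + Sr - s x)) <=
         \sum_(x <- r) (1 - c ^+ s x) * (1 + c ^+ (g x + 1)).
  rewrite big_seq [X in _ <= X]big_seq; apply: ler_sum => x xr.
  have [a0 a1] := andP (pow_01 (s x) h0 h1).
  apply: ler_wpM2l; first lra.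
  rewrite lerD2l /z -exprD; apply: ler_wiXn2l => //.
  have := Hg x xr; have := sum_mem_le s xr; rewrite -/Sr. lia.
apply: le_trans (_ : _ <= 2 * f%:R * (1 - c) + \sum_(x <- r) (1 - c ^+ s x) * (1 + z * c ^+ (f + Sr - s x))) _; last by rewrite lerD2l.
rewrite (eq_bigr (fun x => (1 - z) * (1 - c ^+ s x) + z * ((1 - c ^+ s x) * (1 + c ^+ (f + Sr - s x))))); last by move=> x _; ring.
rewrite big_split /= -!mulr_sumr.
have I0 : 1 - c ^+ (f + Sr) <= 2 * f%:R * (1 - c) + \sum_(x <- r) (1 - c ^+ s x).
  have := L1 r s h0 h1; rewrite -/Sr => H1.
  have := L0 f h0 h1 => H2.
  have [a0 a1] := andP (pow_01 f h0 h1).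
  have [b0 b1] := andP (pow_01 Sr h0 h1).
  rewrite exprD; nra.
have I1 : 2 * (1 - c ^+ (f + Sr)) <= 2 * f%:R * (1 - c) +
     \sum_(x <- r) (1 - c ^+ s x) * (1 + c ^+ (f + Sr - s x)).
  case: f {Hg E I0} => [|f].
    rewrite add0n mulr0 mul0r add0r; exact: L2.
  have := L1 r s h0 h1; rewrite -/Sr => H1.
  have := L0 f.+1 h0 h1 => H2.
  have Hs : \sum_(x <- r) (1 - c ^+ s x) <= \sum_(x <- r) (1 - c ^+ s x) * (1 + c ^+ (f.+1 + Sr - s x)).
    rewrite big_seq [X in _ <= X]big_seq; apply: ler_sum => x xr.
    have [a0 a1] := andP (pow_01 (s x) h0 h1).
    have [b0 b1] := andP (pow_01 (f.+1 + Sr - s x) h0 h1).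
    nra.
  have [a0 a1] := andP (pow_01 f h0 h1).
  have [b0 b1] := andP (pow_01 Sr h0 h1).
  move: H2 Hs; rewrite exprD exprS => H2 Hs.
  have cf : c * c ^+ f <= c by nra.
  nra.
have z1' : 0 <= 1 - z by rewrite subr_ge0.
have P0 := ler_wpM2l z1' I0.
have P1 := ler_wpM2l z0 I1.
move: P0 P1.
set A := \sum_(i <- r) (1 - c ^+ s i).
set B := \sum_(i <- r) (1 - c ^+ s i) * (1 + c ^+ (f + Sr - s i)).
set C := c ^+ (f + Sr).
nra.
Qed.

Lemma card_U1_le (U : finType) (j : U) (Y : {set U}) : (#|j |: Y| <= 1 + #|Y|)%N.
Proof. by rewrite cardsU1; case: (j \notin Y). Qed.

Lemma lam_cases (U : finType) (F : {set {set U}}) A B x :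
  laminar F -> A \in F -> B \in F -> x \in A -> x \in B ->
  (A \subset B) || (B \subset A).
Proof.
move=> lam AF BF xA xB; case/or3P: (lam A B AF BF) => [->|->|]; rewrite ?orbT //.
by move=> /disjointFr /(_ xA); rewrite xB.
Qed.

Lemma swap (R : realFieldType) (U : finType) (w : U -> R) (F : {set {set U}})
  (mu : {set U} -> nat) (G X : {set U}) (j : U) :
  laminar F -> injective w -> is_opt F mu w G X -> j \in G -> j \notin X -> 0 < w j ->
  exists2 C, C \in F & [/\ j \in C, (mu C <= #|X :&: C|)%N &
                         forall o, o \in X :&: C -> w j < w o].
Proof.
move=> lam winj [XG Xind Xopt] jG jX wj0.
set P := fun C : {set U} => (C \in F) && (j \in C) && (mu C <= #|X :&: C|)%N.
case: (pickP P) => [C0 PC0|noP].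
  case: (arg_minnP (fun C : {set U} => #|C|) PC0) => C.
  rewrite /P => /andP[/andP[CF jC] tC] Cmin.
  exists C => //; split => // o oXC.
  have oX : o \in X by move: oXC; rewrite inE => /andP[].
  have oC : o \in C by move: oXC; rewrite inE => /andP[].
  have onej : o != j by apply: contraNneq jX => <-.
  set X2 := j |: (X :\ o).
  have X2G : X2 \subset G.
    apply/subsetP => x; rewrite !inE => /orP[/eqP->//|/andP[_ xX]].
    exact: (subsetP XG).
  have X2ind : indep F mu X2.
    move=> A AF.
    have XA := Xind A AF.
    case jA: (j \in A); last first.
      apply: leq_trans XA; apply: subset_leq_card; apply/subsetP => x.
      rewrite !inE => /andP[/orP[/eqP->|/andP[_ ->]]] //; by rewrite jA.
    case tA: (mu A <= #|X :&: A|)%N; last first.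
      apply: leq_trans (_ : (1 + #|X :&: A| <= mu A)%N); last by rewrite add1n ltnNge tA.
      apply: leq_trans (card_U1_le j (X :&: A)); apply: subset_leq_card; apply/subsetP => x.
      by rewrite !inE => /andP[/orP[->//|/andP[_ ->]] ->]; rewrite orbT.
    have oA : o \in A.
      case/orP: (lam_cases lam AF CF jA jC) => sub; last exact: (subsetP sub).
      have PA : P A by rewrite /P AF jA tA.
      have := Cmin A PA => le.
      have : A == C by rewrite eqEcard sub le.
      by move/eqP->.
    apply: leq_trans XA.
    apply: leq_trans (_ : (#|j |: ((X :&: A) :\ o)| <= _)%N).
      apply: subset_leq_card; apply/subsetP => x.
      rewrite !inE => /andP[/orP[->//|/andP[xo xX]] xA].
      by rewrite xo xX xA orbT.
    apply: leq_trans (card_U1_le _ _) _.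
    rewrite (cardsD1 o (X :&: A)) inE oX oA /=; by [].
  have := Xopt X2 X2G X2ind.
  rewrite /wset big_setU1 /=; last by rewrite !inE negb_and jX orbT.
  rewrite (big_setD1 o oX) /= lerD2r => le.
  rewrite lt_neqAle le andbT.
  by apply: contra onej => /eqP/winj ->.
exfalso.
have X2G : j |: X \subset G.
  apply/subsetP => x; rewrite !inE => /orP[/eqP->//|xX].
  exact: (subsetP XG).
have X2ind : indep F mu (j |: X).
  move=> A AF.
  have XA := Xind A AF.
  case jA: (j \in A); last first.
    apply: leq_trans XA; apply: subset_leq_card; apply/subsetP => x.
    rewrite !inE => /andP[/orP[/eqP->|->]] //; by rewrite jA.
  have := noP A; rewrite /P AF jA /= => /negbT; rewrite -ltnNge => lt.
  apply: leq_trans (_ : (#|j |: (X :&: A)| <= _)%N).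
    apply: subset_leq_card; apply/subsetP => x.
    by rewrite !inE => /andP[/orP[->//|->] ->]; rewrite orbT.
  by apply: leq_trans (card_U1_le j (X :&: A)) _; rewrite add1n.
have := Xopt _ X2G X2ind.
rewrite /wset big_setU1 //=; lra.
Qed.

Lemma key (R : realFieldType) (U : finType) (w : U -> R) (F : {set {set U}})
  (mu : {set U} -> nat) (OPT : {set U} -> {set U}) (B : {set U}) (i j : U) :
  (forall x, 0 <= w x) -> injective w -> laminar F ->
  [set: U] \in F -> B \in F ->
  (forall B, B \in F -> is_opt F mu w B (OPT B)) ->
  i \in OPT [set: U] -> i \in B -> j \in OPT B -> w i < w j -> j \in OPT [set: U].
Proof.
move=> w0 winj lam TF BF opt iO iB jP wij.
set O := OPT [set: U]; set P := OPT B.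
apply/negPn/negP => jO.
set Z := [set x in P | (x \notin O) && (w i < w x)].
have jZ : j \in Z by rewrite inE jP jO wij.
case: (@arg_maxP _ _ _ j (mem Z) w jZ) => js jsZ jsmax.
have : js \in Z := jsZ. rewrite inE => /andP[jsP /andP[jsO wijs]].
have maxZ : forall p, p \in P -> w js < w p -> p \in O.
  move=> p pP lt; apply/negPn/negP => pO.
  have : p \in Z by rewrite inE pP pO (lt_trans wijs lt).
  by move/jsmax => /= h; move: h; rewrite leNgt lt.
have [PB Pind Popt] := opt B BF.
have [OT Oind Oopt] := opt _ TF.
have jsB : js \in B := subsetP PB _ jsP.
have wjs0 : 0 < w js := le_lt_trans (w0 i) wijs.
have [C CF [jsC tC Cgt]] := swap lam winj (opt _ TF) (in_setT js) jsO wjs0.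
case/orP: (lam_cases lam CF BF jsC jsB) => sub; last first.
  have : i \in O :&: C by rewrite inE iO (subsetP sub).
  by move/Cgt; rewrite ltNge (ltW wijs).
have [o oOC oP] : exists2 o, o \in O :&: C & o \notin P.
  apply/exists_inP; rewrite -negb_forall_in; apply/negP => /forall_inP all.
  have sub2 : O :&: C \proper P :&: C.
    apply/properP; split.
      apply/subsetP => x xOC; rewrite inE (all x xOC).
      by move: xOC; rewrite inE => /andP[].
    by exists js; rewrite !inE ?jsP ?jsC ?(negbTE jsO).
  have := proper_card sub2; have := Pind C CF.
  move=> a b; have := leq_trans b a; rewrite ltnNge tC //.
have oB : o \in B by apply: (subsetP sub); move: oOC; rewrite inE => /andP[].
have wjso := Cgt o oOC.
have [D DF [oD tD Dgt]] := swap lam winj (opt _ BF) oB oP (lt_trans wjs0 wjso).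
have sub3 : P :&: D \proper O :&: D.
  apply/properP; split.
    apply/subsetP => x; rewrite !inE => /andP[xP xD]; rewrite xD andbT.
    apply: maxZ => //; apply: (lt_trans wjso); apply: Dgt; by rewrite inE xP xD.
  exists o; first by rewrite inE oD; move: oOC; rewrite inE => /andP[->].
  by rewrite inE (negbTE oP).
have := proper_card sub3; have := Oind D DF.
move=> a b; have := leq_trans b a; rewrite ltnNge tD //.
Qed.

Definition hB (R : realFieldType) (U : finType) (w : U -> R) (O B : {set U}) (i : U) : nat :=
  #|[set j in O :&: B | w i < w j]|.

Lemma brank_ge (R : realFieldType) (U : finType) (w : U -> R) (F : {set {set U}})
  (mu : {set U} -> nat) (OPT : {set U} -> {set U}) (B : {set U}) (i : U) :
  (forall x, 0 <= w x) -> injective w -> laminar F ->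
  [set: U] \in F -> B \in F ->
  (forall B, B \in F -> is_opt F mu w B (OPT B)) ->
  #|OPT B| = mu B ->
  i \in OPT [set: U] -> i \in B ->
  (mu B <= 1 + brank OPT w i B + hB w (OPT [set: U]) B i)%N.
Proof.
move=> w0 winj lam TF BF opt card iO iB.
have [PB _ _] := opt B BF.
rewrite -card -(cardsID [set j | w j < w i] (OPT B)).
have -> : OPT B :&: [set j | w j < w i] = [set j in OPT B | w j < w i].
  by apply/setP => x; rewrite !inE.
rewrite /brank [(1 + _)%N]addnC -addnA leq_add2l.
rewrite /hB; apply: leq_trans (card_U1_le i _); apply: subset_leq_card.
apply/subsetP => x; rewrite !inE -leNgt => /andP[le xP].
case: (eqVneq x i) => [->|xi] //=.
have lt : w i < w x by rewrite lt_neqAle le andbT; apply: contra xi => /eqP/winj ->.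
by rewrite (key w0 winj lam TF BF opt iO iB xP lt) (subsetP PB _ xP).
Qed.

Lemma abel (R : realFieldType) (U : finType) (n : nat) (X : {set U}) (w d : U -> R) :
  #|X| = n -> injective w -> (forall i, i \in X -> 0 <= w i) ->
  (forall i0, i0 \in X -> \sum_(i in X | w i0 <= w i) d i <= 0) ->
  \sum_(i in X) w i * d i <= 0.
Proof.
elim: n X w => [|n IH] X w cX winj w0 pre.
  by move/eqP: cX; rewrite cards_eq0 => /eqP->; rewrite big_set0.
have : (0 < #|X|)%N by rewrite cX.
rewrite card_gt0 => /set0Pn[m0 m0X].
case: (@arg_minP _ _ _ m0 (mem X) w m0X) => m mX mmin.
have mX' : m \in X := mX.
rewrite (eq_bigr (fun i => (w i - w m) * d i + w m * d i)); last by move=> i _; ring.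
rewrite big_split /= -mulr_sumr.
have h2 : w m * \sum_(i in X) d i <= 0.
  rewrite mulr_ge0_le0 ?w0 //.
  have := pre m mX'; rewrite (eq_bigl (fun i => i \in X)) // => i.
  case iX : (i \in X) => //=; exact: mmin.
rewrite -[X in _ <= X](addr0 0).
apply: lerD => //.
rewrite (big_setD1 m mX') /= subrr mul0r add0r.
apply: (IH (X :\ m) (fun i => w i - w m)).
- by move: cX; rewrite (cardsD1 m) mX' add1n => -[].
- by move=> x y /= /addIr /winj.
- move=> i; rewrite !inE => /andP[_ iX]; rewrite subr_ge0; exact: mmin.
- move=> i0; rewrite !inE => /andP[i0m i0X].
  have lt : w m < w i0.
    rewrite lt_neqAle (mmin i0 i0X) andbT.
    by apply: contra i0m => /eqP/winj ->.
  have := pre i0 i0X.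
  rewrite (eq_bigl (fun i => (i \in X :\ m) && (w i0 - w m <= w i - w m))) //.
  move=> i; rewrite !inE lerD2r.
  case: (eqVneq i m) => [->|//] /=.
  by rewrite mX' leNgt lt.
Qed.

Lemma ranksum (R : realFieldType) (U : finType) (n : nat) (X : {set U}) (w : U -> R) (Fk : nat -> R) :
  #|X| = n -> injective w ->
  \sum_(i in X) Fk #|[set j in X | w i < w j]| = \sum_(k < n) Fk k.
Proof.
elim: n X Fk => [|n IH] X Fk cX winj.
  by move/eqP: cX; rewrite cards_eq0 => /eqP->; rewrite big_set0 big_ord0.
have : (0 < #|X|)%N by rewrite cX.
rewrite card_gt0 => /set0Pn[m0 m0X].
case: (@arg_maxP _ _ _ m0 (mem X) w m0X) => m mX mmax.
have mX' : m \in X := mX.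
rewrite (big_setD1 m mX') big_ord_recl /=.
have -> : [set j in X | w m < w j] = set0.
  apply/setP => j; rewrite !inE; apply/negbTE; rewrite negb_and -leNgt.
  case jX: (j \in X) => //=; exact: mmax.
rewrite cards0; congr (_ + _).
have cX' : #|X :\ m| = n by move: cX; rewrite (cardsD1 m) mX' add1n => -[].
rewrite -(IH (X :\ m) (fun k => Fk k.+1) cX' winj).
apply: eq_bigr => i; rewrite !inE => /andP[im iX].
have lt : w i < w m.
  have hle : w i <= w m := mmax i iX. rewrite lt_neqAle hle andbT.
  by apply: contra im => /eqP/winj ->.
congr Fk.
have -> : [set j in X | w i < w j] = m |: [set j in X :\ m | w i < w j].
  apply/setP => j; rewrite !inE.
  case: (eqVneq j m) => [->|//] /=.
  by rewrite mX' lt.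
by rewrite cardsU1 !inE eqxx.
Qed.

Lemma geom (R : realFieldType) (c : R) (g s : nat) :
  (1 - c) * \sum_(k < s) c ^+ (g + s - k) = c ^+ (g + 1) * (1 - c ^+ s).
Proof.
elim: s => [|s IH]; first by rewrite big_ord0 expr0 subrr !mulr0.
rewrite big_ord_recl /= subn0.
rewrite (eq_bigr (fun k : 'I_s => c ^+ (g + s - k))); last first.
  move=> k _; congr (_ ^+ _); rewrite /bump /=; lia.
rewrite mulrDr IH addnS !exprS !exprD expr1; ring.
Qed.

Definition par (U : finType) (F : {set {set U}}) (B : {set U}) : {set U} :=
  [arg min_(D < [set: U] | (D \in F) && (B \proper D)) #|D|].

Definition nr (U : finType) (B : {set U}) := (B != set0) && (B != [set: U]).

Definition kids (U : finType) (F : {set {set U}}) (D : {set U}) : {set {set U}} :=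
  [set B in F | nr B && (par F B == D)].

Lemma par_spec (U : finType) (F : {set {set U}}) (B : {set U}) :
  B != [set: U] -> [set: U] \in F ->
  [/\ par F B \in F, B \proper par F B &
      forall D, D \in F -> B \proper D -> (#|par F B| <= #|D|)%N].
Proof.
move=> BT TF.
have PT : ([set: U] \in F) && (B \proper [set: U]) by rewrite TF properT.
rewrite /par; case: (@arg_minnP _ [set: U] (fun D => (D \in F) && (B \proper D)) (fun D : {set U} => #|D|) PT) => D /andP[DF BD] Dmin.
split => // D' D'F BD'; apply: Dmin; by rewrite D'F BD'.
Qed.

Lemma par_min (U : finType) (F : {set {set U}}) (B D : {set U}) :
  laminar F -> nr B -> [set: U] \in F -> D \in F -> B \proper D -> par F B \subset D.
Proof.
move=> lam /andP[B0 BT] TF DF BD.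
have [PF BP Pmin] := par_spec BT TF.
have [x xB] := set0Pn _ B0.
have xP : x \in par F B by apply: (subsetP (proper_sub BP)).
have xD : x \in D by apply: (subsetP (proper_sub BD)).
case/orP: (lam_cases lam PF DF xP xD) => // DP.
have := Pmin D DF BD => le.
have : D == par F B by rewrite eqEcard DP le.
by move/eqP <-.
Qed.

Lemma kids_disj (U : finType) (F : {set {set U}}) (D B1 B2 : {set U}) :
  laminar F -> [set: U] \in F -> B1 \in kids F D -> B2 \in kids F D -> B1 != B2 ->
  [disjoint B1 & B2].
Proof.
move=> lam TF; rewrite !inE => /andP[B1F /andP[nr1 /eqP p1]] /andP[B2F /andP[nr2 /eqP p2]] ne.
have gen : forall A1 A2, A1 \in F -> A2 \in F -> nr A1 -> nr A2 -> par F A1 = D -> par F A2 = D ->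
    A1 != A2 -> ~~ (A1 \subset A2).
  move=> A1 A2 A1F A2F n1 n2 q1 q2 ne12; apply/negP => sub.
  have pr : A1 \proper A2 by rewrite properEneq ne12 sub.
  move: (n1) (n2) => /andP[_ A1T] /andP[_ A2T].
  have [_ _ min1] := par_spec A1T TF.
  have [_ pr2 _] := par_spec A2T TF.
  have := min1 A2 A2F pr; rewrite q1 => le.
  have := proper_card pr2; rewrite q2 ltnNge le //.
case/or3P: (lam B1 B2 B1F B2F) => [s|s|//].
  by move: (gen B1 B2 B1F B2F nr1 nr2 p1 p2 ne); rewrite s.
by move: (gen B2 B1 B2F B1F nr2 nr1 p2 p1); rewrite eq_sym s => /(_ ne).
Qed.

Lemma kids_sub (U : finType) (F : {set {set U}}) (D B : {set U}) :
  [set: U] \in F -> B \in kids F D -> [/\ B \in F & B \proper D].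
Proof.
move=> TF; rewrite !inE => /andP[BF /andP[/andP[_ BT] /eqP <-]].
by have [_ ? _] := par_spec BT TF.
Qed.

Lemma kids_sum (U : finType) (F : {set {set U}}) (D S : {set U}) :
  laminar F -> [set: U] \in F ->
  (\sum_(B in kids F D) #|S :&: B| <= #|S :&: D|)%N.
Proof.
move=> lam TF.
have -> : (\sum_(B in kids F D) #|S :&: B| = \sum_(B in kids F D) \sum_(x in S :&: D | x \in B) 1)%N.
  apply: eq_bigr => B BK; have [_ BD] := kids_sub TF BK.
  rewrite -sum1_card; apply: eq_bigl => x; rewrite !inE.
  case xB: (x \in B); rewrite ?andbT ?andbF //=.
  by rewrite (subsetP (proper_sub BD) x xB) andbT.
rewrite (@exchange_big_dep _ _ _ _ _ _ _ _ _ (fun x => x \in S :&: D)) /=; last by move=> ? ? _ /andP[].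
rewrite -[X in (_ <= X)%N]sum1_card; apply: leq_sum => x xSD.
have xSD' := xSD; move: xSD'; rewrite inE => /andP[xS xD].
rewrite sum1_card; apply/card_le1P => B1; rewrite unfold_in /= => /and3P[B1K _ xB1] B2; rewrite unfold_in /=.
have K1 := B1K; rewrite inE in K1.
rewrite !inE; case: (eqVneq B2 B1) => [->|ne]; first by rewrite K1 xS xD xB1.
apply/negP => /and3P[B2K' _ xB2].
have B2K : B2 \in kids F D by rewrite inE.
have := kids_disj lam TF B2K B1K ne.
by move/disjointFr => /(_ x xB2); rewrite xB1.
Qed.

Definition EB (R : realFieldType) (U : finType) (mu : {set U} -> nat) (c : R) (S B : {set U}) : R :=
  c ^+ (mu B - #|S :&: B|) * (1 - c ^+ #|S :&: B|).
Definition QB (R : realFieldType) (U : finType) (mu : {set U} -> nat) (c : R) (S B : {set U}) : R :=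
  (1 - c ^+ #|S :&: B|) * (1 + c ^+ (mu B - #|S :&: B| + 1)).

Lemma sum_kids (R : realFieldType) (U : finType) (F : {set {set U}}) (phi : {set U} -> R) :
  [set: U] \in F ->
  \sum_(D in F) \sum_(B in kids F D) phi B = \sum_(B in F | nr B) phi B.
Proof.
move=> TF; rewrite [RHS](partition_big (par F) (fun D => D \in F)) /=; last first.
  move=> B; rewrite /nr => /andP[_ /andP[_ BT]]; by have [] := par_spec BT TF.
apply: eq_bigr => D _; apply: eq_bigl => B; by rewrite inE andbA.
Qed.

Lemma sum_root (R : realFieldType) (U : finType) (F : {set {set U}}) (psi : {set U} -> R) :
  [set: U] \in F -> psi set0 = 0 ->
  \sum_(D in F) psi D = psi [set: U] + \sum_(D in F | nr D) psi D.
Proof.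
move=> TF p0; rewrite (bigID (@nr U)) /= addrC; congr (_ + _).
rewrite (bigD1 [set: U]) /=; last by rewrite TF /nr eqxx andbF.
rewrite big1 ?addr0 // => D /andP[/andP[_ nD] DT].
move: nD; rewrite /nr negb_and DT orbF negbK => /eqP ->; exact: p0.
Qed.

Lemma countA (R : realFieldType) (U : finType) (F : {set {set U}}) (mu : {set U} -> nat)
  (S : {set U}) (c : R) :
  laminar F -> [set: U] \in F ->
  (forall A B, A \in F -> B \in F -> A \proper B -> (mu A < mu B)%N) ->
  (forall B, B \in F -> (#|S :&: B| <= mu B)%N) ->
  0 < c -> c <= 1 / 2 ->
  (1 - c) * \sum_(B in F) EB mu c S B + QB mu c S [set: U] <= 2 * (1 - c) * (#|S :&: [set: U]|)%:R.
Proof.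
move=> lam TF mumon smu hc0 hc.
have stepD : forall D, D \in F ->
   (1 - c) * EB mu c S D + QB mu c S D <=
   2 * (1 - c) * ((#|S :&: D|)%:R - \sum_(B in kids F D) (#|S :&: B|)%:R) +
   \sum_(B in kids F D) QB mu c S B.
  move=> D DF.
  set T := (\sum_(B in kids F D) #|S :&: B|)%N.
  have TD : (T <= #|S :&: D|)%N by exact: kids_sum.
  have := @step _ c _ (enum (kids F D)) (fun B => #|S :&: B|) (fun B => mu B - #|S :&: B|)%N
     (#|S :&: D| - T) (mu D - #|S :&: D|) hc0 hc.
  rewrite big_enum -/T subnK //.
  have Hg : forall x, x \in enum (kids F D) ->
      (mu x - #|S :&: x| + #|S :&: x| < mu D - #|S :&: D| + #|S :&: D|)%N.
    move=> B; rewrite mem_enum => BK; have [BF BD] := kids_sub TF BK.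
    rewrite !subnK ?smu //; exact: mumon.
  move=> /(_ Hg); rewrite big_enum.
  rewrite natrB // -/T natr_sum.
  rewrite /EB /QB -/T.
  set s := #|S :&: D|; set g := (mu D - s)%N.
  move=> H; rewrite exprD expr1.
  have h1 : c <= 1 by lra.
  have [a0 a1] := andP (pow_01 g (ltW hc0) h1).
  nra.
have : \sum_(D in F) ((1 - c) * EB mu c S D + QB mu c S D) <=
  \sum_(D in F) (2 * (1 - c) * ((#|S :&: D|)%:R - \sum_(B in kids F D) (#|S :&: B|)%:R) +
   \sum_(B in kids F D) QB mu c S B) by apply: ler_sum.
rewrite big_split /= -mulr_sumr.
rewrite (sum_root (psi := QB mu c S) TF); last by rewrite /QB setI0 cards0 expr0 subrr mul0r.
rewrite big_split /= -mulr_sumr sumrB.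
rewrite (sum_kids (QB mu c S) TF) (sum_kids (fun B => (#|S :&: B|)%:R : R) TF).
rewrite (sum_root (psi := fun B => (#|S :&: B|)%:R : R) TF); last by rewrite setI0 cards0.
lra.
Qed.

Theorem lemma4 (R : realFieldType) (U : finType) (w : U -> R)
    (F : {set {set U}}) (mu : {set U} -> nat) (OPT : {set U} -> {set U})
    (c : R) :
  (forall x, 0 <= w x) ->
  injective w ->
  laminar F ->
  [set: U] \in F ->
  (forall A, A \in F -> (0 < mu A)%N) ->
  (forall A B, A \in F -> B \in F -> A \proper B -> (mu A < mu B)%N) ->
  (forall B, B \in F -> is_opt F mu w B (OPT B)) ->
  (forall B, B \in F -> #|OPT B| = mu B) ->
  0 < c -> c < 1 / 2 ->
  \sum_(i in OPT [set: U]) w i * (\sum_(B in F | i \in B) c ^+ (1 + brank OPT w i B))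
    <= (2 * c) / (1 - c) * wset w (OPT [set: U]).
Proof.
move=> w0 winj lam TF mupos mumon opt card hc0 hc12.
have hc : c <= 1 / 2 by apply: ltW.
have h0 : 0 <= c by apply: ltW.
have h1 : c <= 1 by lra.
have [_ Oind _] := opt _ TF.
set O := OPT [set: U] in Oind *.
set K := 2 * c / (1 - c).
set coef := fun i => \sum_(B in F | i \in B) c ^+ (mu B - hB w O B i).
have st1 : \sum_(i in O) w i * (\sum_(B in F | i \in B) c ^+ (1 + brank OPT w i B))
    <= \sum_(i in O) w i * coef i.
  apply: ler_sum => i iO; apply: ler_wpM2l; first exact: w0.
  apply: ler_sum => B /andP[BF iB]; apply: ler_wiXn2l => //.
  have := brank_ge w0 winj lam TF BF opt (card B BF) iO iB; rewrite -/O; lia.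
apply: le_trans st1 _.
have pre : forall i0, i0 \in O -> \sum_(i in O | w i0 <= w i) (coef i - K) <= 0.
  move=> i0 i0O.
  set S := [set i in O | w i0 <= w i].
  rewrite (eq_bigl (fun i => i \in S)); last by move=> i; rewrite !inE.
  rewrite sumrB sumr_const.
  have ex : \sum_(i in S) coef i = \sum_(B in F) \sum_(i in S :&: B) c ^+ (mu B - hB w O B i).
    rewrite /coef (@exchange_big_dep _ _ _ _ _ _ _ _ _ (fun B => B \in F)) /=; last by move=> ? ? _ /andP[].
    apply: eq_bigr => B BF; apply: eq_bigl => i; rewrite !inE BF /=; by [].
  have smu : forall B, B \in F -> (#|S :&: B| <= mu B)%N.
    move=> B BF; apply: leq_trans (Oind B BF); apply: subset_leq_card.
    by apply/subsetP => x; rewrite !inE => /andP[/andP[-> _] ->].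
  have eB : forall B, B \in F ->
      (1 - c) * \sum_(i in S :&: B) c ^+ (mu B - hB w O B i) = c * EB mu c S B.
    move=> B BF.
    rewrite (eq_bigr (fun i => c ^+ (mu B - #|[set j in S :&: B | w i < w j]|))); last first.
      move=> i; rewrite !inE => /andP[/andP[iO i0i] iB]; congr (_ ^+ (_ - _)).
      rewrite /hB; apply: eq_card => j; rewrite !inE.
      case: (boolP (w i < w j)) => lt; rewrite ?andbF ?andbT //.
      by rewrite (le_trans i0i (ltW lt)) !andbT.
    rewrite (ranksum (fun k => c ^+ (mu B - k)) erefl winj).
    rewrite /EB -{1}(subnK (smu B BF)) geom exprD expr1; ring.
  rewrite ex -mulr_natr.
  have ce : (1 - c) * \sum_(B in F) \sum_(i in S :&: B) c ^+ (mu B - hB w O B i) =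
            c * \sum_(B in F) EB mu c S B.
    rewrite mulr_sumr mulr_sumr; apply: eq_bigr => B BF; exact: eB.
  have cA := countA lam TF mumon smu hc0 hc.
  have Q0 : 0 <= QB mu c S [set: U].
    have [a0 a1] := andP (pow_01 #|S :&: [set: U]| h0 h1).
    have [b0 b1] := andP (pow_01 (mu [set: U] - #|S :&: [set: U]| + 1) h0 h1).
    rewrite /QB; nra.
  move: ce cA Q0; rewrite setIT.
  set X := \sum_(B in F) \sum_(i in S :&: B) _.
  set Y := \sum_(B in F) EB mu c S B.
  set N := (#|S|)%:R.
  have eK : (1 - c) * K = 2 * c by rewrite /K; field; lra.
  move=> ce cA Q0.
  have Y2 : Y <= 2 * N.
    have : (1 - c) * (Y - 2 * N) <= 0 by lra.
    rewrite pmulr_rle0; first lra.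
    by rewrite subr_gt0; lra.
  have : (1 - c) * (X - K * N) <= 0.
    rewrite mulrBr mulrA eK ce; nra.
  rewrite pmulr_rle0; first lra.
  by rewrite subr_gt0; lra.
have := abel erefl winj (fun i _ => w0 i) pre.
rewrite (eq_bigr (fun i => w i * coef i - K * w i)); last by move=> i _; ring.
rewrite sumrB -mulr_sumr /wset; lra.
Qed.
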